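(* For real numbers $a<b$, the structure $([a,b],\oplus,a,b)$, where $x\oplus y=\tfrac{x+y}{2}$, is an interval object in the category of sets: it is an m-convex body, and for every m-convex body $(A,m)$ in sets and all $x,y\in A$ there is a unique midpoint homomorphism $h\colon[a,b]\to A$ with $h(a)=x$ and $h(b)=y$.
   Context: A midpoint set is a set $A$ with $m\colon A\times A\to A$ satisfying $m(x,x)=x$, $m(x,y)=m(y,x)$, $m(m(x,y),m(z,w))=m(m(x,z),m(y,w))$. It is cancellative if $m(x,y)=m(x,z)$ implies $y=z$, and iterative if for every set $X$ and functions $h\colon X\to A$, $t\colon X\to X$ there is a unique $u\colon X\to A$ with $u(x)=m(h(x),u(t(x)))$. An m-convex body is a cancellative iterative midpoint set; a midpoint homomorphism is a function preserving the midpoint operation. *)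

(* Defs.v *)
From Stdlib Require Import Reals.
Open Scope R_scope.

Definition midpoint_set {A : Type} (m : A -> A -> A) : Prop :=
  (forall x, m x x = x) /\
  (forall x y, m x y = m y x) /\
  (forall x y z w, m (m x y) (m z w) = m (m x z) (m y w)).

Definition cancellative {A : Type} (m : A -> A -> A) : Prop :=
  forall x y z, m x y = m x z -> y = z.

Definition iterative {A : Type} (m : A -> A -> A) : Prop :=
  forall (X : Type) (h : X -> A) (t : X -> X),
    exists u : X -> A,
      (forall x, u x = m (h x) (u (t x))) /\
      (forall v : X -> A, (forall x, v x = m (h x) (v (t x))) ->
                          forall x, v x = u x).

Definition m_convex_body {A : Type} (m : A -> A -> A) : Prop :=
  midpoint_set m /\ cancellative m /\ iterative m.

Definition midpoint_hom {A B : Type} (mA : A -> A -> A) (mB : B -> B -> B)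
  (f : A -> B) : Prop :=
  forall x y, f (mA x y) = mB (f x) (f y).

Definition Icc (a b : R) : Type := { x : R | a <= x <= b }.

Lemma Icc_mid_ok (a b x y : R) :
  a <= x <= b -> a <= y <= b -> a <= (x + y) / 2 <= b.
Proof.
  intros [] []; split; unfold Rdiv;
  apply Rmult_le_reg_r with 2; try (apply Rlt_0_2);
  rewrite Rmult_assoc, Rinv_l, Rmult_1_r by (apply not_0_IZR; discriminate);
  replace (a * 2) with (a + a) by ring; replace (b * 2) with (b + b) by ring;
  apply Rplus_le_compat; assumption.
Qed.

Definition Icc_mid (a b : R) (x y : Icc a b) : Icc a b :=
  exist _ ((proj1_sig x + proj1_sig y) / 2)
        (Icc_mid_ok a b _ _ (proj2_sig x) (proj2_sig y)).

Definition Icc_a (a b : R) (hab : a < b) : Icc a b :=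
  exist _ a (conj (Rle_refl a) (Rlt_le a b hab)).
Definition Icc_b (a b : R) (hab : a < b) : Icc a b :=
  exist _ b (conj (Rlt_le a b hab) (Rle_refl b)).

(* Main.v *)
Require Import Defs.
From Stdlib Require Import Reals Lra Lia Psatz ProofIrrelevance.
Open Scope R_scope.

Lemma Icc_eq (a b : R) (p q : Icc a b) : proj1_sig p = proj1_sig q -> p = q.
Proof.
  destruct p as [p hp], q as [q hq]; simpl; intros ->.
  f_equal; apply proof_irrelevance.
Qed.

Lemma Icc_mid_val (a b : R) (p q : Icc a b) :
  proj1_sig (Icc_mid a b p q) = (proj1_sig p + proj1_sig q) / 2.
Proof. reflexivity. Qed.

Lemma abs_le z c : Rabs z <= c -> -c <= z <= c.
Proof. unfold Rabs; destruct Rcase_abs; lra. Qed.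
Lemma le_abs z c : -c <= z <= c -> Rabs z <= c.
Proof. unfold Rabs; destruct Rcase_abs; lra. Qed.
Lemma abs_lt z c : Rabs z < c -> -c < z < c.
Proof. unfold Rabs; destruct Rcase_abs; lra. Qed.
Lemma lt_abs z c : -c < z < c -> Rabs z < c.
Proof. unfold Rabs; destruct Rcase_abs; lra. Qed.

Lemma pow2_pos n : 0 < 2 ^ n.
Proof. apply pow_lt; lra. Qed.

Lemma pow2_ge_INR n : INR n <= 2 ^ n.
Proof.
  induction n. simpl; lra.
  rewrite S_INR. change (2 ^ S n) with (2 * 2 ^ n).
  assert (1 <= 2 ^ n) by (apply pow_R1_Rle; lra). lra.
Qed.

Lemma small_pow (c e : R) : 0 < e -> exists N, c / 2 ^ N < e.
Proof.
  intros He.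
  destruct (Rle_lt_dec c 0) as [Hc|Hc].
  - exists O. simpl. unfold Rdiv. rewrite Rinv_1. lra.
  - destruct (archimed_cor1 (e / c)) as [N [HN1 HN2]].
    { unfold Rdiv; apply Rmult_lt_0_compat; [lra| apply Rinv_0_lt_compat; lra]. }
    exists N.
    assert (HI : 0 < INR N) by (apply lt_0_INR; lia).
    assert (H1 : / 2 ^ N <= / INR N) by (apply Rinv_le_contravar; [exact HI| apply pow2_ge_INR]).
    unfold Rdiv.
    apply Rle_lt_trans with (c * / INR N).
    + apply Rmult_le_compat_l; lra.
    + assert (H2 : c * / INR N < c * (e / c)) by (apply Rmult_lt_compat_l; lra).
      replace (c * (e / c)) with e in H2 by (field; lra). exact H2.
Qed.

Lemma le_eps (d c : R) : (forall n, d <= c / 2 ^ n) -> d <= 0.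
Proof.
  intros H. destruct (Rle_lt_dec d 0) as [|Hd]; auto.
  destruct (small_pow c d Hd) as [N HN]. specialize (H N). lra.
Qed.

Lemma abs_eps0 (d c : R) : (forall n, Rabs d <= c / 2 ^ n) -> d = 0.
Proof.
  intros H. apply le_eps in H. apply abs_le in H. lra.
Qed.

Fixpoint Sq (a b : R) (X : Type) (h : X -> Icc a b) (t : X -> X) (n : nat) (x : X) : R :=
  match n with
  | O => a
  | S n' => (proj1_sig (h x) + Sq a b X h t n' (t x)) / 2
  end.

Lemma Sq_S a b X h t n x :
  Sq a b X h t (S n) x = (proj1_sig (h x) + Sq a b X h t n (t x)) / 2.
Proof. reflexivity. Qed.

Lemma Sq_range a b X h t : a <= b -> forall n x, a <= Sq a b X h t n x <= b.
Proof.
  intros Hab n. induction n; intro x.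
  - simpl; lra.
  - rewrite Sq_S. destruct (h x) as [hx [H1 H2]]; simpl.
    specialize (IHn (t x)). lra.
Qed.

Lemma half_pow (c : R) n : c / 2 ^ S n = (c / 2 ^ n) / 2.
Proof.
  change (2 ^ S n) with (2 * 2 ^ n). pose proof (pow2_pos n). field. lra.
Qed.

Lemma Sq_cauchy a b X h t : a <= b -> forall n k x,
  Rabs (Sq a b X h t (n + k) x - Sq a b X h t n x) <= (b - a) / 2 ^ n.
Proof.
  intros Hab n. induction n; intros k x.
  - replace ((b - a) / 2 ^ 0) with (b - a) by (simpl; field).
    apply le_abs. pose proof (Sq_range a b X h t Hab k x) as HH. change (Sq a b X h t (0 + k) x) with (Sq a b X h t k x). change (Sq a b X h t 0 x) with a. lra.
  - rewrite Nat.add_succ_l, !Sq_S, half_pow.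
    specialize (IHn k (t x)). apply abs_le in IHn. apply le_abs.
    set (e := (b - a) / 2 ^ n) in *. lra.
Qed.

Lemma lim_bound (U : nat -> R) l n c :
  Un_cv U l -> (forall k, Rabs (U (n + k)%nat - U n) <= c) -> Rabs (U n - l) <= c.
Proof.
  intros Hcv Hk. destruct (Rle_lt_dec (Rabs (U n - l)) c) as [|Hlt]; auto.
  exfalso.
  destruct (Hcv (Rabs (U n - l) - c)) as [N HN]; [lra|].
  specialize (HN (n + N)%nat ltac:(lia)). specialize (Hk N). unfold R_dist in HN.
  pose proof (Rabs_triang (U n - U (n+N)%nat) (U (n+N)%nat - l)) as Ht.
  replace (U n - U (n+N)%nat + (U (n+N)%nat - l)) with (U n - l) in Ht by ring.
  rewrite (Rabs_minus_sym (U n) (U (n+N)%nat)) in Ht. lra.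
Qed.

Lemma Icc_iter (a b : R) (hab : a < b) : iterative (Icc_mid a b).
Proof.
  intros X h t.
  assert (Hle : a <= b) by lra.
  pose proof (Sq_range a b X h t Hle) as Hr.
  pose proof (Sq_cauchy a b X h t Hle) as Hc.
  assert (HC : forall x, Cauchy_crit (fun n => Sq a b X h t n x)).
  { intros x eps Heps.
    destruct (small_pow (b - a) (eps / 2)) as [N HN]; [lra|].
    exists N. intros n m Hn Hm. unfold R_dist.
    pose proof (Hc N (n - N)%nat x) as H1. pose proof (Hc N (m - N)%nat x) as H2.
    replace (N + (n - N))%nat with n in H1 by lia.
    replace (N + (m - N))%nat with m in H2 by lia.
    apply abs_le in H1; apply abs_le in H2. apply lt_abs. lra. }
  assert (HL : forall x, {l | Un_cv (fun n => Sq a b X h t n x) l})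
    by (intro x; apply R_complete; apply HC).
  set (L := fun x => proj1_sig (HL x)).
  assert (HLcv : forall x, Un_cv (fun n => Sq a b X h t n x) (L x))
    by (intro x; exact (proj2_sig (HL x))).
  assert (Hb : forall n x, Rabs (Sq a b X h t n x - L x) <= (b - a) / 2 ^ n).
  { intros n x. apply (lim_bound (fun n => Sq a b X h t n x)); auto. }
  assert (HLr : forall x, a <= L x <= b).
  { intro x. split.
    - assert (a - L x <= 0); [|lra]. apply (le_eps _ (b - a)). intro n.
      specialize (Hb n x). specialize (Hr n x). apply abs_le in Hb. lra.
    - assert (L x - b <= 0); [|lra]. apply (le_eps _ (b - a)). intro n.
      specialize (Hb n x). specialize (Hr n x). apply abs_le in Hb. lra. }
  assert (HLf : forall x, L x = (proj1_sig (h x) + L (t x)) / 2).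
  { intro x.
    assert (L x - (proj1_sig (h x) + L (t x)) / 2 = 0); [|lra].
    apply (abs_eps0 _ (b - a)). intro n.
    pose proof (Hb (S n) x) as H1. pose proof (Hb n (t x)) as H2.
    rewrite Sq_S, half_pow in H1.
    apply abs_le in H1; apply abs_le in H2. apply le_abs.
    set (e := (b - a) / 2 ^ n) in *. lra. }
  exists (fun x => exist _ (L x) (HLr x)). split.
  - intro x. apply Icc_eq. rewrite Icc_mid_val. simpl. apply HLf.
  - intros v Hv x.
    apply Icc_eq. simpl.
    assert (proj1_sig (v x) - L x = 0); [|lra].
    apply (abs_eps0 _ (b - a)). intro n. revert x. induction n; intro x.
    + destruct (v x) as [vx Hvx]; simpl. specialize (HLr x).
      replace ((b - a) / 2 ^ 0) with (b - a) by (simpl; field). apply le_abs. lra.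
    + rewrite (Hv x), Icc_mid_val, (HLf x), half_pow.
      specialize (IHn (t x)). apply abs_le in IHn. apply le_abs.
      set (e := (b - a) / 2 ^ n) in *. lra.
Qed.

Lemma Icc_body (a b : R) (hab : a < b) : m_convex_body (Icc_mid a b).
Proof.
  split; [|split].
  - split; [|split].
    + intro p. apply Icc_eq. rewrite Icc_mid_val. lra.
    + intros p q. apply Icc_eq. rewrite !Icc_mid_val. lra.
    + intros p q r s. apply Icc_eq. rewrite !Icc_mid_val. lra.
  - intros p q r H. apply Icc_eq. apply (f_equal (@proj1_sig _ _)) in H.
    rewrite !Icc_mid_val in H. lra.
  - apply Icc_iter; exact hab.
Qed.

Lemma iter_uniq {A : Type} (m : A -> A -> A) : iterative m ->
  forall (X : Type) (h : X -> A) (t : X -> X) (F G : X -> A),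
  (forall x, F x = m (h x) (F (t x))) -> (forall x, G x = m (h x) (G (t x))) ->
  forall x, F x = G x.
Proof.
  intros Hit X h t F G HF HG x. destruct (Hit X h t) as [u [_ Hu]].
  rewrite (Hu F HF x), (Hu G HG x). reflexivity.
Qed.

Definition clampR (lo hi r : R) : R := Rmax lo (Rmin hi r).

Lemma clampR_range lo hi r : lo <= hi -> lo <= clampR lo hi r <= hi.
Proof. intros; unfold clampR, Rmax, Rmin; repeat destruct Rle_dec; lra. Qed.
Lemma clampR_id lo hi r : lo <= r <= hi -> clampR lo hi r = r.
Proof. intros; unfold clampR, Rmax, Rmin; repeat destruct Rle_dec; lra. Qed.
Lemma clampR_lo lo hi r : lo <= hi -> r <= lo -> clampR lo hi r = lo.
Proof. intros; unfold clampR, Rmax, Rmin; repeat destruct Rle_dec; lra. Qed.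
Lemma clampR_hi lo hi r : lo <= hi -> hi <= r -> clampR lo hi r = hi.
Proof. intros; unfold clampR, Rmax, Rmin; repeat destruct Rle_dec; lra. Qed.

Inductive three := J0 | J1 | J2.
Definition jv (j : three) : R := match j with J0 => 0 | J1 => 1 | J2 => 2 end.
Definition jd {A : Type} (m : A -> A -> A) (x y : A) (j : three) : A :=
  match j with J0 => x | J1 => m x y | J2 => y end.

Lemma univ01 (A : Type) (m : A -> A -> A) (Hmc : m_convex_body m) (x y : A) :
  exists u : R -> A,
    (forall s, u s = m (if Rle_dec s (1/2) then x else y)
                      (u (if Rle_dec s (1/2) then 2 * s else 2 * s - 1))) /\
    u 0 = x /\ u 1 = y /\
    (forall p q, 0 <= p <= 1 -> 0 <= q <= 1 -> u ((p + q) / 2) = m (u p) (u q)).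
Proof.
  destruct Hmc as [[Hid [Hcom Hmed]] [_ Hit]].
  destruct (Hit R (fun s => if Rle_dec s (1/2) then x else y)
                  (fun s => if Rle_dec s (1/2) then 2 * s else 2 * s - 1)) as [u [Hu _]].
  exists u. split; [exact Hu|].
  assert (ule : forall s r, s <= 1/2 -> r = 2 * s -> u s = m x (u r)).
  { intros s r Hs ->. rewrite (Hu s). destruct (Rle_dec s (1/2)); [reflexivity | lra]. }
  assert (ugt : forall s r, 1/2 < s -> r = 2 * s - 1 -> u s = m y (u r)).
  { intros s r Hs ->. rewrite (Hu s). destruct (Rle_dec s (1/2)); [lra | reflexivity]. }
  assert (fixA : forall z w, m z w = w -> w = z).
  { intros z w Hzw.
    apply (iter_uniq m Hit unit (fun _ => z) (fun v => v) (fun _ => w) (fun _ => z)).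
    - intros _; symmetry; exact Hzw.
    - intros _; symmetry; apply Hid.
    - exact tt. }
  assert (u0 : u 0 = x) by (apply fixA; symmetry; apply ule; lra).
  assert (u1 : u 1 = y) by (apply fixA; symmetry; apply ugt; lra).
  split; [exact u0|]. split; [exact u1|].
  assert (half0 : forall w, 0 <= w <= 1 -> forall s, s = w / 2 -> u s = m x (u w)).
  { intros w Hw s Hs. apply ule; lra. }
  assert (half2 : forall w, 0 <= w <= 1 -> forall s, s = w / 2 + 1 / 2 -> u s = m y (u w)).
  { intros w Hw s Hs. destruct (Rle_lt_dec w 0) as [Hw0|Hw0].
    - assert (w = 0) by lra. subst w.
      rewrite (ule s 1) by lra. rewrite u0, u1. apply Hcom.
    - apply ugt; lra. }
  assert (E : forall p : R * three,
     u (clampR 0 1 (fst p) / 2 + jv (snd p) / 4)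
     = m (jd m x y (snd p)) (u (clampR 0 1 (fst p)))).
  { apply (iter_uniq m Hit (R * three)
      (fun p => match snd p with
                | J1 => if Rle_dec (clampR 0 1 (fst p)) (1/2) then x else y
                | _ => u (clampR 0 1 (fst p) / 2 + jv (snd p) / 4) end)
      (fun p => match snd p with
                | J1 => if Rle_dec (clampR 0 1 (fst p)) (1/2)
                        then (2 * clampR 0 1 (fst p), J2)
                        else (2 * clampR 0 1 (fst p) - 1, J0)
                | _ => p end)
      (fun p => u (clampR 0 1 (fst p) / 2 + jv (snd p) / 4))
      (fun p => m (jd m x y (snd p)) (u (clampR 0 1 (fst p))))).
    - intros [v j]. cbn [fst snd].
      pose proof (clampR_range 0 1 v ltac:(lra)) as Hw.
      set (w := clampR 0 1 v) in *.
      destruct j; cbn [jv jd].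
      + symmetry; apply Hid.
      + destruct (Rle_dec w (1/2)); cbn [fst snd jv]; rewrite clampR_id by lra.
        * apply ule; lra.
        * apply ugt; lra.
      + symmetry; apply Hid.
    - intros [v j]. cbn [fst snd].
      pose proof (clampR_range 0 1 v ltac:(lra)) as Hw.
      set (w := clampR 0 1 v) in *.
      destruct j; cbn [jv jd].
      + rewrite (half0 w Hw (w / 2 + 0 / 4)) by lra. symmetry; apply Hid.
      + destruct (Rle_dec w (1/2)); cbn [fst snd jv jd]; rewrite clampR_id by lra.
        * rewrite (ule w (2 * w)) by lra. rewrite Hmed, Hid. reflexivity.
        * rewrite (ugt w (2 * w - 1)) by lra. rewrite (Hcom x y), Hmed, Hid. reflexivity. 
      + rewrite (half2 w Hw (w / 2 + 2 / 4)) by lra. symmetry; apply Hid. }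
  assert (half1 : forall w, 0 <= w <= 1 -> forall s, s = w / 2 + 1 / 4 ->
                  u s = m (m x y) (u w)).
  { intros w Hw s Hs. specialize (E (w, J1)). cbn [fst snd jv jd] in E.
    rewrite clampR_id in E by lra. rewrite Hs. exact E. }
  assert (E2 : forall p : R * R,
     u ((clampR 0 1 (fst p) + clampR 0 1 (snd p)) / 2)
     = m (u (clampR 0 1 (fst p))) (u (clampR 0 1 (snd p)))).
  { apply (iter_uniq m Hit (R * R)
      (fun p => m (if Rle_dec (clampR 0 1 (fst p)) (1/2) then x else y)
                  (if Rle_dec (clampR 0 1 (snd p)) (1/2) then x else y))
      (fun p => (if Rle_dec (clampR 0 1 (fst p)) (1/2) then 2 * clampR 0 1 (fst p)
                 else 2 * clampR 0 1 (fst p) - 1,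
                 if Rle_dec (clampR 0 1 (snd p)) (1/2) then 2 * clampR 0 1 (snd p)
                 else 2 * clampR 0 1 (snd p) - 1))
      (fun p => u ((clampR 0 1 (fst p) + clampR 0 1 (snd p)) / 2))
      (fun p => m (u (clampR 0 1 (fst p))) (u (clampR 0 1 (snd p))))).
    - intros [p q]. cbn [fst snd].
      pose proof (clampR_range 0 1 p ltac:(lra)) as HP.
      pose proof (clampR_range 0 1 q ltac:(lra)) as HQ.
      set (P := clampR 0 1 p) in *. set (Q := clampR 0 1 q) in *.
      destruct (Rle_dec P (1/2)); destruct (Rle_dec Q (1/2));
        rewrite ?(clampR_id 0 1 (2 * P)) by lra;
        rewrite ?(clampR_id 0 1 (2 * Q)) by lra;
        rewrite ?(clampR_id 0 1 (2 * P - 1)) by lra;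
        rewrite ?(clampR_id 0 1 (2 * Q - 1)) by lra.
      + rewrite Hid. apply half0; lra.
      + apply half1; lra.
      + rewrite (Hcom y x). apply half1; lra.
      + rewrite Hid. apply half2; lra.
    - intros [p q]. cbn [fst snd].
      pose proof (clampR_range 0 1 p ltac:(lra)) as HP.
      pose proof (clampR_range 0 1 q ltac:(lra)) as HQ.
      set (P := clampR 0 1 p) in *. set (Q := clampR 0 1 q) in *.
      rewrite (Hu P), (Hu Q).
      destruct (Rle_dec P (1/2)); destruct (Rle_dec Q (1/2));
        rewrite ?(clampR_id 0 1 (2 * P)) by lra;
        rewrite ?(clampR_id 0 1 (2 * Q)) by lra;
        rewrite ?(clampR_id 0 1 (2 * P - 1)) by lra;
        rewrite ?(clampR_id 0 1 (2 * Q - 1)) by lra;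
        apply Hmed. }
  intros p q Hp Hq. specialize (E2 (p, q)). cbn [fst snd] in E2.
  rewrite !clampR_id in E2 by lra. exact E2.
Qed.

Theorem mainTheorem15 (a b : R) (hab : a < b) :
  m_convex_body (Icc_mid a b) /\
  (forall (A : Type) (m : A -> A -> A), m_convex_body m ->
     forall x y : A,
       exists h : Icc a b -> A,
         (midpoint_hom (Icc_mid a b) m h /\ h (Icc_a a b hab) = x /\ h (Icc_b a b hab) = y) /\
         (forall g : Icc a b -> A,
            midpoint_hom (Icc_mid a b) m g -> g (Icc_a a b hab) = x -> g (Icc_b a b hab) = y ->
            forall t, g t = h t)).
Proof.
  split; [apply Icc_body; exact hab|].
  intros A m Hmc x y.
  destruct (univ01 A m Hmc x y) as [u [Hu [u0 [u1 Hhom]]]].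
  destruct Hmc as [[Hid [Hcom Hmed]] [_ Hit]].
  assert (Hle : a <= b) by lra.
  assert (Hk : 0 < / (b - a)) by (apply Rinv_0_lt_compat; lra).
  assert (Hk1 : (b - a) * / (b - a) = 1) by (field; lra).
  set (N := fun r : Icc a b => (proj1_sig r - a) / (b - a)).
  assert (HN : forall r, 0 <= N r <= 1).
  { intros [r [H1 H2]]. unfold N, Rdiv; simpl. split; nra. }
  exists (fun r => u (N r)). split; [split; [|split]|].
  - intros r s. unfold N at 1. rewrite Icc_mid_val.
    replace (((proj1_sig r + proj1_sig s) / 2 - a) / (b - a)) with ((N r + N s) / 2)
      by (unfold N; field; lra).
    apply Hhom; apply HN.
  - unfold N; simpl. replace ((a - a) / (b - a)) with 0 by (field; lra). exact u0.
  - unfold N; simpl. replace ((b - a) / (b - a)) with 1 by (field; lra). exact u1.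
  - intros g Hg ga gb.
    set (clI := fun v => exist (fun z => a <= z <= b) (clampR a b v) (clampR_range a b v Hle)
                  : Icc a b).
    set (G := fun p => g (clI (a + p * (b - a)))).
    assert (HG : forall p, G p = m (if Rle_dec p (1/2) then x else y)
                      (G (if Rle_dec p (1/2) then 2 * p else 2 * p - 1))).
    { intro p. unfold G. destruct (Rle_dec p (1/2)).
      - destruct (Rlt_le_dec p 0).
        + assert (E1 : clI (a + p * (b - a)) = Icc_a a b hab).
          { apply Icc_eq; simpl. apply clampR_lo; nra. }
          assert (E2 : clI (a + 2 * p * (b - a)) = Icc_a a b hab).
          { apply Icc_eq; simpl. apply clampR_lo; nra. }
          rewrite E1, E2, ga. symmetry; apply Hid.
        + assert (E1 : clI (a + p * (b - a)) = Icc_mid a b (Icc_a a b hab) (clI (a + 2 * p * (b - a)))).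
          { apply Icc_eq. rewrite Icc_mid_val. simpl.
            rewrite !clampR_id by nra. field. }
          rewrite E1, Hg, ga. reflexivity.
      - destruct (Rle_lt_dec p 1).
        + assert (E1 : clI (a + p * (b - a)) = Icc_mid a b (Icc_b a b hab) (clI (a + (2 * p - 1) * (b - a)))).
          { apply Icc_eq. rewrite Icc_mid_val. simpl.
            rewrite !clampR_id by nra. field. }
          rewrite E1, Hg, gb. reflexivity.
        + assert (E1 : clI (a + p * (b - a)) = Icc_b a b hab).
          { apply Icc_eq; simpl. apply clampR_hi; nra. }
          assert (E2 : clI (a + (2 * p - 1) * (b - a)) = Icc_b a b hab).
          { apply Icc_eq; simpl. apply clampR_hi; nra. }
          rewrite E1, E2, gb. symmetry; apply Hid. }
    assert (GU : forall p, G p = u p).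
    { apply (iter_uniq m Hit R (fun s => if Rle_dec s (1/2) then x else y)
               (fun s => if Rle_dec s (1/2) then 2 * s else 2 * s - 1)); assumption. }
    intro r. rewrite <- GU. unfold G. f_equal. apply Icc_eq. simpl.
    destruct r as [r Hr]; unfold N; simpl.
    rewrite clampR_id; [field; lra|].
    replace (a + (r - a) / (b - a) * (b - a)) with r by (field; lra). exact Hr.
Qed.
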